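(* Let $n\ge2$, let $\mathbf{x}=(x_1,\dots,x_n)^T\in\mathbb{C}^n$ with $x_i\neq x_j$ for all $i\neq j$, and let $F$ and $A^{(k)}(\mathbf{x})$ be as in the context. Then for each $k\in\{1,\dots,n\}$ the matrix $M^{(k)}:=F'(\mathbf{x})^{-1}A^{(k)}(\mathbf{x})$ has entries \[ M^{(k)}_{jl}=\begin{cases} \dfrac{1}{x_k-x_j}, & j=l\neq k,\\[2ex] \dfrac{1}{x_l-x_k}, & j=k,\ l\neq k,\\[2ex] 0, & \text{otherwise (in particular } M^{(k)}_{kk}=0\text{)}. \end{cases} \]
   Context: Let $p(t)=t^n+a_{n-1}t^{n-1}+\dots+a_1t+a_0$ be a monic polynomial of degree $n$ with real coefficients, and set $\mathbf{a}=(a_0,a_1,\dots,a_{n-1})^T$. Define $V=(v_1,\dots,v_n)^T:\mathbb{C}^n\to\mathbb{C}^n$ by \[ v_{n-\nu+1}(\mathbf{x})=\sum_{i_1<i_2<\dots<i_\nu}(-x_{i_1})(-x_{i_2})\cdots(-x_{i_\nu}),\qquad \nu=1,\dots,n, \] (the sum running over all $\nu$-element index sets $\{i_1<\dots<i_\nu\}\subseteq\{1,\dots,n\}$), so that $\prod_{j=1}^n(t-x_j)=t^n+\sum_{j=0}^{n-1}v_{j+1}(\mathbf{x})t^j$. Define $F=(f_1,\dots,f_n)^T:\mathbb{C}^n\to\mathbb{C}^n$ by $F(\mathbf{x})=V(\mathbf{x})-\mathbf{a}$, with Jacobian $F'(\mathbf{x})$ (invertible when the $x_i$ are pairwise distinct).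 For $k=1,\dots,n$, $A^{(k)}(\mathbf{x})\in\mathbb{C}^{n\times n}$ is the matrix whose $(i,l)$ entry is $\partial^2 f_i(\mathbf{x})/\partial x_l\partial x_k$. *)

(* Defs.v *)
From HB Require Import structures.
From mathcomp Require Import all_boot all_order all_algebra.
From mathcomp Require Import complex.
From mathcomp Require Import reals.
From mathcomp Require Import mpoly.
Set Implicit Arguments. Unset Strict Implicit. Unset Printing Implicit Defensive.
Import Order.TTheory GRing.Theory Num.Theory.
Local Open Scope ring_scope.
Local Open Scope complex_scope.

(* The polynomial map V = (v_1,...,v_n) as polynomials in X_1..X_n (0-based
   index i : 'I_n stands for the paper's index i+1):
   v_{n-nu+1} = sum over nu-subsets {i_1<...<i_nu} of prod (-X_{i_j}).
   With 0-based index i, nu = n - i. *)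
Definition Vpoly (K : comNzRingType) (n : nat) (i : 'I_n) : {mpoly K[n]} :=
  \sum_(h : {set 'I_n} | #|h| == (n - i)%N) \prod_(j in h) (- 'X_j).

(* F = V - a, componentwise, with a_j (the coefficient of t^j) embedded as a
   constant polynomial; here a : 'I_n -> K with a i = a_{i} (0-based). *)
Definition Fpoly (K : comNzRingType) (n : nat) (a : 'I_n -> K) (i : 'I_n)
  : {mpoly K[n]} := Vpoly K i - (a i)%:MP.

Definition Jac (K : comNzRingType) (n : nat) (a : 'I_n -> K) (x : 'I_n -> K)
  : 'M[K]_n := \matrix_(i < n, l < n) ((Fpoly a i)^`M(l)).@[x].

Definition Ak (K : comNzRingType) (n : nat) (a : 'I_n -> K) (k : 'I_n)
  (x : 'I_n -> K) : 'M[K]_n :=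
  \matrix_(i < n, l < n) (((Fpoly a i)^`M(k))^`M(l)).@[x].

(* Main.v *)
Require Import Defs.
From HB Require Import structures.
From mathcomp Require Import all_boot all_order all_algebra.
From mathcomp Require Import complex reals mpoly.
Import Order.TTheory GRing.Theory Num.Theory.
Local Open Scope ring_scope.

Section Poly.
Variables (K : comNzRingType) (n : nat).
Implicit Types (u : K).

Lemma dX (j l : 'I_n) : ('X_j : {mpoly K[n]})^`M(l) = (j == l)%:R.
Proof.
rewrite mderivX mnm1E; case: eqP => [->|_]; last by rewrite scale0r.
by rewrite scale1r -{1}[U_(l)%MM]add0m addmK mpolyX0.
Qed.

Definition lin u (j : 'I_n) : {mpoly K[n]} := u%:MP - 'X_j.

Lemma dlin u j l : (lin u j)^`M(l) = - (j == l)%:R.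
Proof. by rewrite /lin mderivB mderivC dX sub0r. Qed.

Lemma dprod0 u (P : pred 'I_n) l : (forall j, P j -> j != l) ->
  (\prod_(j | P j) lin u j)^`M(l) = 0.
Proof.
move=> H; apply: (big_ind (fun p : {mpoly K[n]} => p^`M(l) = 0)).
- by rewrite -mpolyC1 mderivC.
- by move=> p q hp hq; rewrite mderivM hp hq mul0r mulr0 addr0.
- by move=> j /H /negbTE; rewrite dlin => ->; rewrite oppr0.
Qed.

Lemma dprod u (P : pred 'I_n) l :
  (\prod_(j | P j) lin u j)^`M(l) =
  if P l then - \prod_(j | P j && (j != l)) lin u j else 0.
Proof.
case: ifP => Pl; last first.
  by apply: dprod0 => j Pj; apply/eqP => ejl; rewrite -ejl Pj in Pl.
rewrite (bigD1 l) //= mderivM dlin eqxx dprod0 ?mulr0 ?addr0 ?mulN1r //.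
by move=> j /andP[].
Qed.

Definition W (i : 'I_n.+1) : {mpoly K[n]} :=
  \sum_(h : {set 'I_n} | #|h| == (n - i)%N) \prod_(j in h) (- 'X_j).

Lemma Wmax : W ord_max = 1.
Proof.
rewrite /W subnn (big_pred1 set0) ?big_set0 // => h.
by rewrite cards_eq0.
Qed.

Lemma gen u : \sum_(i < n.+1) u ^+ i *: W i = \prod_(j < n) lin u j.
Proof.
rewrite /lin.
rewrite [RHS](eq_bigr (fun j => - 'X_j + u%:MP)); last by move=> j _; rewrite addrC.
rewrite bigA_distr /=.
rewrite (partition_big (fun h : {set 'I_n} => inord (n - #|h|) : 'I_n.+1) xpredT) //=.
apply: eq_bigr => i _; rewrite /W scaler_sumr.
have hn : (#|'I_n| = n)%N by rewrite card_ord.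
apply: eq_big => [h|h /eqP hi].
  have hc : (#|h| <= n)%N by have := max_card h; rewrite card_ord.
  apply/eqP/eqP => [->|<-].
    have hi : (i <= n)%N := ltn_ord i.
    by apply/val_inj; rewrite /= subKn // inordK.
  by rewrite inordK ?ltnS ?leq_subr // subKn.
rewrite [RHS](bigID (mem h)) /=.
have E1 : \prod_(j in h) (if j \in h then - 'X_j else u%:MP) = \prod_(j in h) (- 'X_j : {mpoly K[n]}).
  by apply: eq_bigr => j ->.
have E2 : \prod_(j | j \notin h) (if j \in h then - 'X_j else u%:MP) = (u ^+ i)%:MP :> {mpoly K[n]}.
  rewrite (eq_bigr (fun _ => u%:MP)); last by move=> j /negbTE ->.
  rewrite prodr_const.
  have -> : #|(fun j : 'I_n => j \notin h)| = i.
    have hc : #|(fun j : 'I_n => j \notin h)| = #|[predC h]| by apply: eq_card.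
    have := cardC h; rewrite card_ord => hh.
    have hi' : (i <= n)%N := ltn_ord i.
    by rewrite hc; apply/eqP; rewrite -(eqn_add2l #|h|) hh hi subnK.
  by rewrite rmorphXn.
by rewrite E1 E2 mulrC mul_mpolyC.
Qed.

Lemma sumD1 u l : \sum_(i < n) u ^+ i *: (Vpoly K i)^`M(l) =
  - \prod_(j | j != l) lin u j.
Proof.
have := congr1 (mderiv l) (gen u).
rewrite raddf_sum big_ord_recr /= Wmax mderivZ -mpolyC1 mderivC scaler0 addr0.
rewrite (dprod u xpredT) /= => E.
transitivity (- \prod_(j | true && (j != l)) lin u j); last by [].
rewrite -E; apply: eq_bigr => i _; rewrite mderivZ //.
Qed.

Lemma sumD2 u k l : \sum_(i < n) u ^+ i *: ((Vpoly K i)^`M(k))^`M(l) =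
  if l == k then 0 else \prod_(j | (j != k) && (j != l)) lin u j.
Proof.
have := congr1 (mderiv l) (sumD1 u k).
rewrite raddf_sum /= => E.
rewrite (eq_bigr (fun i : 'I_n => (u ^+ i *: (Vpoly K i)^`M(k))^`M(l))); last first.
  by move=> i _; rewrite mderivZ.
rewrite E mderivN (dprod u (fun j => j != k)) eq_sym.
by case: eqP => _ /=; rewrite ?oppr0 ?opprK.
Qed.

Lemma evD1 u l (x : 'I_n -> K) :
  \sum_(i < n) u ^+ i * ((Vpoly K i)^`M(l)).@[x] = - \prod_(j | j != l) (u - x j).
Proof.
have := congr1 (meval x) (sumD1 u l).
rewrite raddf_sum rmorphN rmorph_prod /= => E.
transitivity (- \prod_(j | j != l) (lin u j).@[x]).
  by rewrite -E; apply: eq_bigr => i _; rewrite mevalZ.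
by congr (- _); apply: eq_bigr => j _; rewrite /lin raddfB /= mevalC mevalXU.
Qed.

Lemma evD2 u k l (x : 'I_n -> K) :
  \sum_(i < n) u ^+ i * (((Vpoly K i)^`M(k))^`M(l)).@[x] =
  if l == k then 0 else \prod_(j | (j != k) && (j != l)) (u - x j).
Proof.
have := congr1 (meval x) (sumD2 u k l).
rewrite raddf_sum /= => E.
rewrite (eq_bigr (fun i : 'I_n => (u ^+ i *: ((Vpoly K i)^`M(k))^`M(l)).@[x])); last first.
  by move=> i _; rewrite mevalZ.
rewrite E; case: eqP => _; first by rewrite meval0.
by rewrite rmorph_prod; apply: eq_bigr => j _; rewrite /lin raddfB /= mevalC mevalXU.
Qed.
End Poly.

From mathcomp Require Import ring.

Section Mat.
Variables (K : fieldType) (n : nat) (a : 'I_n -> K) (x : 'I_n -> K).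
Hypothesis xd : forall i j : 'I_n, i != j -> x i != x j.

Lemma JacE i l : Jac a x i l = ((Vpoly K i)^`M(l)).@[x].
Proof. by rewrite mxE /Fpoly mderivB mderivC subr0. Qed.

Lemma AkE k i l : Ak a k x i l = (((Vpoly K i)^`M(k))^`M(l)).@[x].
Proof. by rewrite mxE /Fpoly mderivB mderivC subr0. Qed.

Definition c (j : 'I_n) := \prod_(m | m != j) (x j - x m).

Lemma c_neq0 j : c j != 0.
Proof.
apply/prodf_neq0 => m mj; rewrite subr_eq0; apply: xd; by rewrite eq_sym.
Qed.

Definition Wm : 'M[K]_n := \matrix_(j, i) ((- c j)^-1 * x j ^+ i).

Lemma WmE (B : 'M[K]_n) j l :
  (Wm *m B) j l = (- c j)^-1 * \sum_(i < n) x j ^+ i * B i l.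
Proof.
rewrite mxE mulr_sumr; apply: eq_bigr => i _; by rewrite mxE mulrA.
Qed.

Lemma WJ : Wm *m Jac a x = 1%:M.
Proof.
apply/matrixP => j l; rewrite WmE (eq_bigr (fun i : 'I_n => x j ^+ i * ((Vpoly K i)^`M(l)).@[x])); last first.
  by move=> i _; rewrite JacE.
rewrite evD1 mxE; case: eqP => [->|/eqP jl].
  by rewrite -/(c l) invrN mulNr mulrN opprK mulVf ?c_neq0.
by rewrite (bigD1 j jl) /= subrr mul0r oppr0 mulr0.
Qed.

Lemma main k j l : (invmx (Jac a x) *m Ak a k x) j l =
    (if (j == l) && (j != k) then (x k - x j)^-1
     else if (j == k) && (l != k) then (x l - x k)^-1
     else 0).
Proof.
have [_ Ju] := mulmx1_unit WJ.
have -> : invmx (Jac a x) = Wm.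
  by rewrite -[invmx _]mul1mx -WJ -mulmxA mulmxV // mulmx1.
rewrite WmE (eq_bigr (fun i : 'I_n => x j ^+ i * (((Vpoly K i)^`M(k))^`M(l)).@[x])); last first.
  by move=> i _; rewrite AkE.
rewrite evD2.
case: (eqVneq l k) => [->|lk].
  by rewrite mulr0 andbN; case: (j == k).
have P0 : forall m, \prod_(i | (i != k) && (i != m)) (x m - x i) != 0.
  move=> m; apply/prodf_neq0 => i /andP[ik im]; rewrite subr_eq0; apply: xd; by rewrite eq_sym.
case: (eqVneq j l) => [->|jl] /=.
  rewrite lk /= /c (bigD1 k) 1?eq_sym //=.
  rewrite (eq_bigl (fun i => (i != k) && (i != l))); last by move=> i; rewrite andbC.
  have := P0 l; have : x l - x k != 0 by rewrite subr_eq0 xd // eq_sym.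
  move=> h1 h2; field.
  by rewrite oppr_eq0 mulf_neq0 // andbT subr_eq0 xd // eq_sym.
case: (eqVneq j k) => [->|jk] /=.
  rewrite /c (bigD1 l lk) /=.
  have h2 : \prod_(i | (i != k) && (i != l)) (x k - x i) != 0.
    apply/prodf_neq0 => i /andP[ik _]; rewrite subr_eq0; apply: xd; by rewrite eq_sym.
  have h1 : x k - x l != 0 by rewrite subr_eq0 xd // eq_sym.
  field.
  by rewrite oppr_eq0 mulf_neq0 // andbT subr_eq0 xd.
have hj : (j != k) && (j != l) by rewrite jk jl.
by rewrite (bigD1 j hj) /= subrr mul0r mulr0.
Qed.
End Mat.

Local Open Scope complex_scope.

Theorem mainTheorem5 (R : realType) (n : nat) (a : 'I_n -> R)
  (x : 'I_n -> R[i]) :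
  (2 <= n)%N ->
  (forall i j : 'I_n, i != j -> x i != x j) ->
  forall k j l : 'I_n,
    (invmx (Jac (fun i => (a i)%:C) x) *m Ak (fun i => (a i)%:C) k x) j l =
    (if (j == l) && (j != k) then (x k - x j)^-1
     else if (j == k) && (l != k) then (x l - x k)^-1
     else 0).
Proof. by move=> _ xd k j l; apply: main. Qed.
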